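(* Let $(G,\mathcal F_\bullet G,\mathfrak R)$ be a filtered Rota–Baxter group. Then $(\mathsf{gr}\,G,\mathsf{gr}\,\mathfrak R)$ is a graded Rota–Baxter Lie ring; that is, $\mathsf{gr}\,\mathfrak R$ is an additive map satisfying $[\mathsf{gr}\mathfrak R(a),\mathsf{gr}\mathfrak R(b)]=\mathsf{gr}\mathfrak R\big([\mathsf{gr}\mathfrak R(a),b]+[a,\mathsf{gr}\mathfrak R(b)]+[a,b]\big)$ for all $a,b\in\mathsf{gr}\,G$, and $\mathsf{gr}\mathfrak R(\mathsf{gr}_nG)\subset\mathsf{gr}_nG$ for all $n\ge1$.
   Context: For a group $G$, write $(x,y)=xyx^{-1}y^{-1}$, and for subgroups $H,K$ let $(H,K)$ be the subgroup generated by $(x,y)$, $x\in H$, $y\in K$. A filtered group $(G,\mathcal F_\bullet G)$ is a group with subgroups $G=\mathcal F_1G\supset\mathcal F_2G\supset\cdots$ such that $(\mathcal F_nG,\mathcal F_mG)\subset\mathcal F_{n+m}G$ for all $n,m\ge1$; then each $\mathcal F_nG$ is normal and $\mathsf{gr}_nG=\mathcal F_nG/\mathcal F_{n+1}G$ is an abelian group, written additively: $\bar x+\bar y=\overline{xy}$. Let $\mathsf{gr}\,G=\bigoplus_{n\ge1}\mathsf{gr}_nG$, with the biadditive bracket determined by $[\bar x,\bar y]=\overline{(x,y)}\in\mathsf{gr}_{n+m}G$ for $x\in\mathcal F_nG$, $y\in\mathcal F_mG$; this is a graded Lie ring. A Rota–Baxter group is a group with a map $\mathfrak R$ satisfying $\mathfrak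 R(g)\mathfrak R(h)=\mathfrak R(g\mathfrak R(g)h\mathfrak R(g)^{-1})$; a filtered Rota–Baxter group $(G,\mathcal F_\bullet G,\mathfrak R)$ is a filtered group with a Rota–Baxter operator satisfying $\mathfrak R(\mathcal F_nG)\subset\mathcal F_nG$ for all $n$. The maps $\mathfrak R_n:\mathsf{gr}_nG\to\mathsf{gr}_nG$, $\mathfrak R_n(\bar x)=\overline{\mathfrak R(x)}$, are well-defined group homomorphisms, and $\mathsf{gr}\,\mathfrak R:\mathsf{gr}\,G\to\mathsf{gr}\,G$ is defined by $\mathsf{gr}\mathfrak R(a_1+\cdots+a_k)=\mathfrak R_{i_1}(a_1)+\cdots+\mathfrak R_{i_k}(a_k)$ for $a_j\in\mathsf{gr}_{i_j}G$. *)

(* Defs.v *)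
From Stdlib Require Import Arith List.
Import ListNotations.
Set Implicit Arguments.

Record group := Group {
  gcar :> Type;
  gmul : gcar -> gcar -> gcar;
  ginv : gcar -> gcar;
  gone : gcar;
  gmulA : forall x y z, gmul x (gmul y z) = gmul (gmul x y) z;
  gmul1 : forall x, gmul gone x = x;
  gmulV : forall x, gmul (ginv x) x = gone
}.

Arguments gmul {g}. Arguments ginv {g}. Arguments gone {g}.

Section Defs.
Context {G : group}.

Definition comm (x y : G) : G := gmul (gmul (gmul x y) (ginv x)) (ginv y).

Definition is_subgroup (P : G -> Prop) : Prop :=
  P gone /\ (forall x y, P x -> P y -> P (gmul x y)) /\ (forall x, P x -> P (ginv x)).

(* Filtration F_1 = G ⊃ F_2 ⊃ ... with (F_n, F_m) ⊂ F_{n+m}, n,m >= 1.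
   Since F_{n+m} is a subgroup, (F_n,F_m) ⊂ F_{n+m} is the same as
   containing all commutators (x,y), x ∈ F_n, y ∈ F_m.  Index 0 is unused. *)
Definition is_filtration (F : nat -> G -> Prop) : Prop :=
  (forall x, F 1 x) /\
  (forall n, 1 <= n -> is_subgroup (F n)) /\
  (forall n x, 1 <= n -> F (S n) x -> F n x) /\
  (forall n m x y, 1 <= n -> 1 <= m -> F n x -> F m y -> F (n + m) (comm x y)).

Definition is_RB (R : G -> G) : Prop :=
  forall g h, gmul (R g) (R h) = R (gmul (gmul (gmul g (R g)) h) (ginv (R g))).

Definition is_filtered_RB (F : nat -> G -> Prop) (R : G -> G) : Prop :=
  is_filtration F /\ is_RB R /\ (forall n x, 1 <= n -> F n x -> F n (R x)).

(* Elements of gr G = ⊕_{n>=1} F_n/F_{n+1} are represented by families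
   a : nat -> G with a n ∈ F_n (n >= 1), whose class in gr_n G vanishes
   for all large n (finite support); a 0 is ignored. *)
Definition gr_elem (F : nat -> G -> Prop) (a : nat -> G) : Prop :=
  (forall n, 1 <= n -> F n (a n)) /\
  (exists N, forall n, N <= n -> F (S n) (a n)).

Definition gr_eq (F : nat -> G -> Prop) (a b : nat -> G) : Prop :=
  forall n, 1 <= n -> F (S n) (gmul (a n) (ginv (b n))).

Definition gr_add (a b : nat -> G) : nat -> G := fun n => gmul (a n) (b n).

Definition gprod (l : list G) : G := fold_right gmul gone l.

(* bracket: degree-k component is sum_{i+j=k, i,j>=1} [a_i, b_j]
   = class of the product of the commutators (a_i, b_{k-i}), i = 1..k-1 *)
Definition gr_bracket (a b : nat -> G) : nat -> G :=
  fun k => gprod (map (fun i => comm (a i) (b (k - i))) (seq 1 (k - 1))).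

Definition gr_R (R : G -> G) (a : nat -> G) : nat -> G := fun n => R (a n).

Definition gr_homog (F : nat -> G -> Prop) (n : nat) (a : nat -> G) : Prop :=
  forall m, 1 <= m -> m <> n -> F (S m) (a m).

End Defs.

(* Main.v *)
Require Import Defs.
From Stdlib Require Import Arith List Lia.
Import ListNotations.

Lemma mulA' (G : group) (x y z : G) : gmul (gmul x y) z = gmul x (gmul y z).
Proof. now rewrite gmulA. Qed.
Lemma mul1l (G : group) (x : G) : gmul gone x = x.
Proof. apply gmul1. Qed.
Lemma mulVl (G : group) (x : G) : gmul (ginv x) x = gone.
Proof. apply gmulV. Qed.
Lemma mulVr (G : group) (x : G) : gmul x (ginv x) = gone.
Proof.
  rewrite <- (gmul1 _ (gmul x (ginv x))).
  rewrite <- (gmulV _ (ginv x)) at 1.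
  rewrite <- gmulA, (gmulA _ (ginv x) x), gmulV, gmul1. apply gmulV.
Qed.
Lemma mul1r (G : group) (x : G) : gmul x gone = x.
Proof. rewrite <- (gmulV _ x), gmulA, mulVr. apply gmul1. Qed.
Lemma mulKl (G : group) (x y : G) : gmul (ginv x) (gmul x y) = y.
Proof. now rewrite gmulA, gmulV, gmul1. Qed.
Lemma mulKr (G : group) (x y : G) : gmul x (gmul (ginv x) y) = y.
Proof. now rewrite gmulA, mulVr, gmul1. Qed.
Lemma inv_uniq (G : group) (x y : G) : gmul x y = gone -> ginv x = y.
Proof. intro H. rewrite <- (mul1r _ (ginv x)), <- H, mulKl. reflexivity. Qed.
Lemma invM (G : group) (x y : G) : ginv (gmul x y) = gmul (ginv y) (ginv x).
Proof. apply inv_uniq. rewrite mulA', (gmulA _ y), mulVr, gmul1. apply mulVr. Qed.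
Lemma invK (G : group) (x : G) : ginv (ginv x) = x.
Proof. apply inv_uniq. apply gmulV. Qed.
Lemma inv1 (G : group) : ginv (@gone G) = gone.
Proof. apply inv_uniq. apply gmul1. Qed.

Global Hint Rewrite mulA' mul1l mul1r mulVl mulVr mulKl mulKr invM invK inv1 : grp.
Ltac gsimpl := unfold comm in *; autorewrite with grp in *.

Definition cong {G : group} (F : nat -> G -> Prop) k (u v : G) := F k (gmul u (ginv v)).


Lemma Fmono {G : group} {F : nat -> G -> Prop} (Hf : is_filtration F) n m x :
  1 <= n -> n <= m -> F m x -> F n x.
Proof.
  intros H1 H2. induction H2; auto.
  intro Hx. apply IHle. destruct Hf as (_ & _ & Hd & _). apply Hd; [lia|exact Hx].
Qed.

Lemma F1 {G : group} {F : nat -> G -> Prop} (Hf : is_filtration F) n :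
  1 <= n -> F n gone.
Proof. intro. destruct Hf as (_ & Hs & _). apply (Hs n H). Qed.
Lemma Fmul {G : group} {F : nat -> G -> Prop} (Hf : is_filtration F) n x y :
  1 <= n -> F n x -> F n y -> F n (gmul x y).
Proof. intro. destruct Hf as (_ & Hs & _). apply (Hs n H). Qed.
Lemma Finv {G : group} {F : nat -> G -> Prop} (Hf : is_filtration F) n x :
  1 <= n -> F n x -> F n (ginv x).
Proof. intro. destruct Hf as (_ & Hs & _). apply (Hs n H). Qed.
Lemma Fcomm {G : group} {F : nat -> G -> Prop} (Hf : is_filtration F) n m x y :
  1 <= n -> 1 <= m -> F n x -> F m y -> F (n + m) (comm x y).
Proof. destruct Hf as (_ & _ & _ & Hc). apply Hc. Qed.
Lemma Fcomm_up {G : group} {F : nat -> G -> Prop} (Hf : is_filtration F) n z c :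
  1 <= n -> F n c -> F (S n) (comm z c).
Proof. intros. apply (Fcomm Hf 1 n); auto. destruct Hf; auto. Qed.
Lemma Fconj {G : group} {F : nat -> G -> Prop} (Hf : is_filtration F) n z c :
  1 <= n -> F n c -> F n (gmul (gmul z c) (ginv z)).
Proof.
  intros. replace (gmul (gmul z c) (ginv z)) with (gmul (comm z c) c).
  - apply Fmul; auto. apply (Fmono Hf n (S n)); auto. apply Fcomm_up; auto.
  - gsimpl. reflexivity.
Qed.

Lemma cong_refl {G : group} {F : nat -> G -> Prop} (Hf : is_filtration F) k u :
  1 <= k -> cong F k u u.
Proof. intros. unfold cong. gsimpl. now apply F1. Qed.
Lemma cong_sym {G : group} {F : nat -> G -> Prop} (Hf : is_filtration F) k u v :
  1 <= k -> cong F k u v -> cong F k v u.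
Proof. unfold cong. intros Hk H. apply Finv in H; auto. gsimpl. exact H. Qed.
Lemma cong_trans {G : group} {F : nat -> G -> Prop} (Hf : is_filtration F) k u v w :
  1 <= k -> cong F k u v -> cong F k v w -> cong F k u w.
Proof. unfold cong. intros Hk H1 H2. pose proof (Fmul Hf _ _ _ Hk H1 H2). gsimpl. exact H. Qed.
Lemma cong_mul {G : group} {F : nat -> G -> Prop} (Hf : is_filtration F) k u u' v v' :
  1 <= k -> cong F k u u' -> cong F k v v' -> cong F k (gmul u v) (gmul u' v').
Proof.
  unfold cong. intros Hk H1 H2.
  pose proof (Fmul Hf _ _ _ Hk (Fconj Hf k u _ Hk H2) H1). gsimpl. exact H.
Qed.
Lemma cong_inv {G : group} {F : nat -> G -> Prop} (Hf : is_filtration F) k u u' :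
  1 <= k -> cong F k u u' -> cong F k (ginv u) (ginv u').
Proof.
  unfold cong. intros Hk H1.
  pose proof (Finv Hf _ _ Hk (Fconj Hf k (ginv u) _ Hk H1)). gsimpl. exact H.
Qed.
Lemma cong_F {G : group} {F : nat -> G -> Prop} (Hf : is_filtration F) k u v :
  1 <= k -> cong F (S k) u v -> F k v -> F k u.
Proof.
  unfold cong. intros Hk H1 H2. apply (Fmono Hf k (S k)) in H1; auto.
  pose proof (Fmul Hf _ _ _ Hk H1 H2). gsimpl. exact H.
Qed.
Lemma cong_central {G : group} {F : nat -> G -> Prop} (Hf : is_filtration F) k z c :
  1 <= k -> F k c -> cong F (S k) (gmul z c) (gmul c z).
Proof. unfold cong. intros. pose proof (Fcomm_up Hf k z c H H0). gsimpl. exact H1. Qed.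
Lemma cong_conj {G : group} {F : nat -> G -> Prop} (Hf : is_filtration F) k z c :
  1 <= k -> F k c -> cong F (S k) (gmul (gmul z c) (ginv z)) c.
Proof. unfold cong. intros. pose proof (Fcomm_up Hf k z c H H0). gsimpl. exact H1. Qed.

Lemma R_shift {G : group} {F : nat -> G -> Prop} {R : G -> G} (H : is_filtered_RB F R) k x y :
  1 <= k -> F k y -> cong F k (R (gmul x y)) (R x).
Proof.
  intros Hk Hy. destruct H as (Hf & HR & HRF).
  set (h := gmul (gmul (ginv (R x)) y) (ginv (ginv (R x)))).
  assert (Hh : F k h) by (apply Fconj; auto).
  pose proof (HR x h) as E.
  replace (gmul (gmul (gmul x (R x)) h) (ginv (R x))) with (gmul x y) in E
    by (unfold h; gsimpl; reflexivity).
  unfold cong. rewrite <- E.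
  pose proof (Fconj Hf k (R x) _ Hk (HRF k h Hk Hh)). gsimpl. exact H.
Qed.

Lemma R_cong {G : group} {F : nat -> G -> Prop} {R : G -> G} (H : is_filtered_RB F R) k u v :
  1 <= k -> cong F k u v -> cong F k (R u) (R v).
Proof.
  intros Hk Huv. pose proof H as (Hf & _).
  assert (Hw : F k (gmul (ginv v) u)).
  { pose proof (Fconj Hf k (ginv v) _ Hk Huv). gsimpl. exact H0. }
  pose proof (R_shift H k v _ Hk Hw). gsimpl. exact H0.
Qed.

Lemma R_add {G : group} {F : nat -> G -> Prop} {R : G -> G} (H : is_filtered_RB F R) k u v :
  1 <= k -> F k u -> F k v -> cong F (S k) (R (gmul u v)) (gmul (R u) (R v)).
Proof.
  intros Hk Hu Hv. pose proof H as (Hf & HR & HRF).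
  rewrite (HR u v).
  assert (Hc : F (S k) (comm (ginv v) (R u))).
  { apply (Fmono Hf (S k) (k + k)); try lia. apply Fcomm; auto. apply Finv; auto. }
  pose proof (R_shift H (S k) (gmul u v) _ ltac:(lia) Hc).
  apply cong_sym; auto.
  replace (gmul (gmul (gmul u (R u)) v) (ginv (R u))) with
    (gmul (gmul u v) (comm (ginv v) (R u))) by (gsimpl; reflexivity).
  exact H0.
Qed.

Lemma R_one {G : group} {R : G -> G} (HR : is_RB R) : R gone = gone.
Proof.
  pose proof (HR gone gone). gsimpl.
  rewrite <- (mul1r _ (R gone)) in H at 3.
  apply (f_equal (gmul (ginv (R gone)))) in H. gsimpl. exact H.
Qed.

Lemma key {G : group} {F : nat -> G -> Prop} {R : G -> G} (H : is_filtered_RB F R) i j x y :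
  1 <= i -> 1 <= j -> F i x -> F j y ->
  cong F (S (i + j)) (comm (R x) (R y))
    (R (gmul (gmul (comm (R x) y) (comm x (R y))) (comm x y))).
Proof.
  intros Hi Hj Hx Hy. pose proof H as (Hf & HR & HRF).
  assert (Hk : 1 <= i + j) by lia.
  set (X := R x). set (Y := R y).
  assert (HX : F i X) by (apply HRF; auto).
  assert (HY : F j Y) by (apply HRF; auto).
  set (c1 := comm X y). set (c2 := comm x Y). set (c3 := comm x y).
  assert (H1 : F (i + j) c1) by (apply Fcomm; auto).
  assert (H2 : F (i + j) c2) by (apply Fcomm; auto).
  assert (H3 : F (i + j) c3) by (apply Fcomm; auto).
  set (t := gmul (gmul c1 c2) c3).
  assert (Ht : F (i + j) t) by (apply Fmul; auto; apply Fmul; auto).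
  set (u := gmul (gmul (gmul x X) y) (ginv X)).
  set (v := gmul (gmul (gmul y Y) x) (ginv Y)).
  assert (E1 : gmul X Y = R u) by apply HR.
  assert (E2 : gmul Y X = R v) by apply HR.
  set (w := gmul (ginv v) u).
  set (z := ginv (gmul Y X)).
  set (h := gmul (gmul z w) (ginv z)).
  assert (E3 : gmul (gmul Y X) (R h) = gmul X Y).
  { rewrite E2, E1, HR. f_equal. rewrite <- E2. unfold h, z, w. gsimpl. reflexivity. }
  assert (Hwt : cong F (S (i + j)) w t).
  { replace w with (gmul (gmul (gmul (gmul (ginv x) c2) (ginv (ginv x)))
       (gmul (gmul (gmul (gmul (ginv x) (ginv y)) x) c1) (ginv (gmul (gmul (ginv x) (ginv y)) x))))
       (gmul (gmul (gmul (ginv x) (ginv y)) c3) (ginv (gmul (ginv x) (ginv y))))).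
    2:{ unfold w, u, v, c1, c2, c3. gsimpl. reflexivity. }
    apply (cong_trans Hf) with (v := gmul (gmul c2 c1) c3); [lia| |].
    - apply (cong_mul Hf); [lia| |]. apply (cong_mul Hf); [lia| |].
      all: apply (cong_conj Hf); auto.
    - apply (cong_mul Hf); [lia| |]. apply (cong_central Hf); auto. apply (cong_refl Hf); auto. }
  assert (Hw : F (i + j) w) by (apply (cong_F Hf _ _ _ Hk Hwt Ht)).
  assert (Hh : F (i + j) h) by (apply Fconj; auto).
  assert (Ec : comm X Y = gmul (gmul (gmul Y X) (R h)) (ginv (gmul Y X))).
  { rewrite E3. gsimpl. reflexivity. }
  rewrite Ec.
  apply (cong_trans Hf) with (v := R h); [lia| |].
  - apply (cong_conj Hf); auto.
  - apply R_cong; [exact H|lia|]. apply (cong_trans Hf) with (v := w); [lia| |exact Hwt].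
    apply (cong_conj Hf); auto.
Qed.

Lemma gprod_F {G : group} {F : nat -> G -> Prop} (Hf : is_filtration F) k (f : nat -> G) l :
  1 <= k -> (forall i, In i l -> F k (f i)) -> F k (gprod (map f l)).
Proof.
  intros Hk. induction l as [|a l IH]; intros Hl; simpl.
  - apply F1; auto.
  - apply Fmul; auto. apply Hl; simpl; auto. apply IH. intros; apply Hl; simpl; auto.
Qed.

Lemma gprod_cong {G : group} {F : nat -> G -> Prop} (Hf : is_filtration F) k (f g : nat -> G) l :
  1 <= k -> (forall i, In i l -> cong F k (f i) (g i)) ->
  cong F k (gprod (map f l)) (gprod (map g l)).
Proof.
  intros Hk. induction l as [|a l IH]; intros Hl; simpl.
  - apply (cong_refl Hf); auto.
  - apply (cong_mul Hf); auto. apply Hl; simpl; auto. apply IH. intros; apply Hl; simpl; auto.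
Qed.

Lemma gprod_mul {G : group} {F : nat -> G -> Prop} (Hf : is_filtration F) k (f g : nat -> G) l :
  1 <= k -> (forall i, In i l -> F k (f i) /\ F k (g i)) ->
  cong F (S k) (gprod (map (fun i => gmul (f i) (g i)) l))
    (gmul (gprod (map f l)) (gprod (map g l))).
Proof.
  intros Hk. induction l as [|a l IH]; intros Hl; simpl.
  - gsimpl. apply (cong_refl Hf); auto.
  - assert (Hr : forall i, In i l -> F k (f i) /\ F k (g i)) by (intros; apply Hl; simpl; auto).
    destruct (Hl a (or_introl eq_refl)) as [Hfa Hga].
    apply (cong_trans Hf) with (v := gmul (gmul (f a) (g a)) (gmul (gprod (map f l)) (gprod (map g l)))); [lia| |].
    + apply (cong_mul Hf); auto. apply (cong_refl Hf); auto.
    + rewrite !mulA'. apply (cong_mul Hf); [lia|apply (cong_refl Hf); lia|].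
      rewrite !gmulA. apply (cong_mul Hf); [lia| |apply (cong_refl Hf); lia].
      apply (cong_central Hf); auto. apply (gprod_F Hf); auto. intros; apply Hr; auto.
Qed.

Lemma R_gprod {G : group} {F : nat -> G -> Prop} {R : G -> G} (H : is_filtered_RB F R) k (f : nat -> G) l :
  1 <= k -> (forall i, In i l -> F k (f i)) ->
  cong F (S k) (R (gprod (map f l))) (gprod (map (fun i => R (f i)) l)).
Proof.
  pose proof H as (Hf & HR & HRF).
  intros Hk. induction l as [|a l IH]; intros Hl; simpl.
  - rewrite (R_one HR). apply (cong_refl Hf); auto.
  - assert (Hr : forall i, In i l -> F k (f i)) by (intros; apply Hl; simpl; auto).
    apply (cong_trans Hf) with (v := gmul (R (f a)) (R (gprod (map f l)))); [lia| |].
    + apply R_add; auto. apply Hl; simpl; auto. apply (gprod_F Hf); auto.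
    + apply (cong_mul Hf); auto. apply (cong_refl Hf); auto.
Qed.

Theorem theorem5p11 (G : group) (F : nat -> G -> Prop) (R : G -> G) :
  is_filtered_RB F R ->
  (* gr R is a well-defined map gr G -> gr G *)
  (forall a, gr_elem F a -> gr_elem F (gr_R R a)) /\
  (forall a b, gr_elem F a -> gr_elem F b -> gr_eq F a b ->
     gr_eq F (gr_R R a) (gr_R R b)) /\
  (* additive *)
  (forall a b, gr_elem F a -> gr_elem F b ->
     gr_eq F (gr_R R (gr_add a b)) (gr_add (gr_R R a) (gr_R R b))) /\
  (* Rota–Baxter identity *)
  (forall a b, gr_elem F a -> gr_elem F b ->
     gr_eq F (gr_bracket (gr_R R a) (gr_R R b))
       (gr_R R (gr_add (gr_add (gr_bracket (gr_R R a) b) (gr_bracket a (gr_R R b)))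
                       (gr_bracket a b)))) /\
  (* gr R preserves each gr_n G *)
  (forall n a, 1 <= n -> gr_elem F a -> gr_homog F n a -> gr_homog F n (gr_R R a)).
Proof.
  intro H. pose proof H as (Hf & HR & HRF).
  split; [|split; [|split; [|split]]].
  - intros a [Ha [N HN]]. split.
    + intros n Hn. apply HRF; auto.
    + exists N. intros n Hn. apply HRF; auto; lia.
  - intros a b _ _ Hab n Hn. apply (R_cong H); [lia|]. apply Hab; auto.
  - intros a b [Ha _] [Hb _] n Hn. apply (R_add H); auto.
  - intros a b [Ha _] [Hb _] n Hn.
    unfold gr_bracket, gr_R, gr_add.
    set (l := seq 1 (n - 1)).
    assert (Hidx : forall i, In i l -> 1 <= i /\ 1 <= n - i /\ i + (n - i) = n).
    { intros i Hi. unfold l in Hi. apply in_seq in Hi. lia. }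
    set (c1 := fun i => comm (R (a i)) (b (n - i))).
    set (c2 := fun i => comm (a i) (R (b (n - i)))).
    set (c3 := fun i => comm (a i) (b (n - i))).
    assert (HC : forall i, In i l -> F n (c1 i) /\ F n (c2 i) /\ F n (c3 i)).
    { intros i Hi. destruct (Hidx i Hi) as (H1 & H2 & H3). rewrite <- H3.
      unfold c1, c2, c3. repeat split; apply Fcomm; auto. }
    change (cong F (S n) (gprod (map (fun i => comm (R (a i)) (R (b (n - i)))) l))
       (R (gmul (gmul (gprod (map c1 l)) (gprod (map c2 l))) (gprod (map c3 l))))).
    apply (cong_trans Hf) with (v := gprod (map (fun i => R (gmul (gmul (c1 i) (c2 i)) (c3 i))) l)); [lia| |].
    { apply (gprod_cong Hf); [lia|]. intros i Hi. destruct (Hidx i Hi) as (H1 & H2 & H3).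
      pose proof (key H i (n - i) (a i) (b (n - i)) H1 H2 (Ha i H1) (Hb _ H2)) as K.
      rewrite H3 in K. exact K. }
    apply (cong_trans Hf) with (v := gprod (map (fun i => gmul (gmul (R (c1 i)) (R (c2 i))) (R (c3 i))) l)); [lia| |].
    { apply (gprod_cong Hf); [lia|]. intros i Hi. destruct (HC i Hi) as (H1 & H2 & H3).
      assert (Hn0 : 1 <= n) by lia.
      apply (cong_trans Hf) with (v := gmul (R (gmul (c1 i) (c2 i))) (R (c3 i))); [lia| |].
      - apply (R_add H); auto. apply Fmul; auto.
      - apply (cong_mul Hf); [lia| |apply (cong_refl Hf); lia]. apply (R_add H); auto. }
    apply (cong_trans Hf) with (v := gmul (gprod (map (fun i => gmul (R (c1 i)) (R (c2 i))) l))
                                          (gprod (map (fun i => R (c3 i)) l))); [lia| |].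
    { apply (gprod_mul Hf n (fun i => gmul (R (c1 i)) (R (c2 i))) (fun i => R (c3 i))); [lia|].
      intros i Hi. destruct (HC i Hi) as (H1 & H2 & H3). split.
      - apply Fmul; auto.
      - apply HRF; auto. }
    apply (cong_trans Hf) with (v := gmul (gmul (gprod (map (fun i => R (c1 i)) l)) (gprod (map (fun i => R (c2 i)) l)))
                                          (gprod (map (fun i => R (c3 i)) l))); [lia| |].
    { apply (cong_mul Hf); [lia| |apply (cong_refl Hf); lia].
      apply (gprod_mul Hf n (fun i => R (c1 i)) (fun i => R (c2 i))); [lia|].
      intros i Hi. destruct (HC i Hi) as (H1 & H2 & H3). split; apply HRF; auto. }
    assert (HP1 : F n (gprod (map c1 l))) by (apply (gprod_F Hf); auto; intros; apply HC; auto).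
    assert (HP2 : F n (gprod (map c2 l))) by (apply (gprod_F Hf); auto; intros; apply HC; auto).
    assert (HP3 : F n (gprod (map c3 l))) by (apply (gprod_F Hf); auto; intros; apply HC; auto).
    apply (cong_trans Hf) with (v := gmul (gmul (R (gprod (map c1 l))) (R (gprod (map c2 l)))) (R (gprod (map c3 l)))); [lia| |].
    { apply (cong_mul Hf); [lia| |]; [apply (cong_mul Hf); [lia| |]|].
      all: apply (cong_sym Hf); [lia|]; apply (R_gprod H); auto; intros; apply HC; auto. }
    apply (cong_sym Hf); [lia|].
    apply (cong_trans Hf) with (v := gmul (R (gmul (gprod (map c1 l)) (gprod (map c2 l)))) (R (gprod (map c3 l)))); [lia| |].
    + apply (R_add H); auto. apply Fmul; auto.
    + apply (cong_mul Hf); [lia| |apply (cong_refl Hf); lia]. apply (R_add H); auto.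
  - intros n a Hn _ Hh m Hm Hmn. apply HRF; [lia|]. apply Hh; auto.
Qed.
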